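(* Suppose $M\preceq N$ are small models in $\mathbb{C}$ and $\langle A_i:i\in I\rangle$ is an $M$-f.s. sequence with $M\cup\bigcup_{i\in I}A_i=N$. Then for every initial segment $I_0\subseteq I$ (with or without a maximum), $M\cup\bigcup_{i\in I_0}A_i$ is an elementary substructure of $N$.
   Context: Work in a monster model $\mathbb{C}$ of an arbitrary complete theory. For $B\supseteq M$, $\mathrm{tp}(X/B)$ is finitely satisfied in $M$ if each of its formulas is satisfied by a tuple from $M$. An $M$-f.s. sequence is a sequence of sets $\langle A_i:i\in I\rangle$ with $\mathrm{tp}(A_i/A_{<i}M)$ finitely satisfied in $M$ for every $i$, where $A_{<i}=\bigcup_{j<i}A_j$. *)

(* Defs.v *)
From Stdlib Require Import List Vectors.Fin PeanoNat.
Set Implicit Arguments.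

Record signature := Signature {
  fsym : Type; far : fsym -> nat;
  rsym : Type; rar : rsym -> nat }.

Section Syntax.
Variable L : signature.

Inductive term : Type :=
| Var : nat -> term
| App : forall f : fsym L, (Fin.t (far L f) -> term) -> term.

(* Formulas with named variables (nat); [Ex x phi] binds variable x. *)
Inductive formula : Type :=
| Fal : formula
| Eq : term -> term -> formula
| Rel : forall r : rsym L, (Fin.t (rar L r) -> term) -> formula
| Neg : formula -> formula
| And : formula -> formula -> formula
| Ex : nat -> formula -> formula.
End Syntax.

(* An L-structure (the ambient model, playing the role of the monster model). *)
Record structure (L : signature) := Structure {
  dom :> Type;
  fint : forall f : fsym L, (Fin.t (far L f) -> dom) -> dom;
  rint : forall r : rsym L, (Fin.t (rar L r) -> dom) -> Prop }.

Section Semantics.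
Variables (L : signature) (C : structure L).

Definition upd (e : nat -> C) (x : nat) (a : C) : nat -> C :=
  fun y => if Nat.eqb y x then a else e y.

Fixpoint eval (e : nat -> C) (t : term L) : C :=
  match t with
  | Var _ n => e n
  | App f ts => fint C f (fun i => eval e (ts i))
  end.

(* Satisfaction in the substructure with universe S (a subset of C);
   quantifiers range over S, symbols are interpreted as in C. *)
Fixpoint sat_in (S : C -> Prop) (e : nat -> C) (phi : formula L) : Prop :=
  match phi with
  | Fal _ => False
  | Eq t1 t2 => eval e t1 = eval e t2
  | Rel r ts => rint C r (fun i => eval e (ts i))
  | Neg psi => ~ sat_in S e psi
  | And p q => sat_in S e p /\ sat_in S e q
  | Ex x psi => exists a, S a /\ sat_in S (upd e x a) psi
  end.

Definition sat (e : nat -> C) (phi : formula L) : Prop :=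
  sat_in (fun _ => True) e phi.

Definition substructure (S : C -> Prop) : Prop :=
  (exists a, S a) /\
  forall f (args : Fin.t (far L f) -> C), (forall i, S (args i)) -> S (fint C f args).

Definition elem_sub (S T : C -> Prop) : Prop :=
  substructure S /\ substructure T /\ (forall a, S a -> T a) /\
  forall (phi : formula L) (e : nat -> C), (forall n, S (e n)) ->
    (sat_in S e phi <-> sat_in T e phi).

(* tp(X/B) is finitely satisfied in M: every formula phi(x_0..x_{n-1}, b)
   with x-variables 0..n-1 realized (in C) by a tuple from X and parameters
   (all other variables) from B, is realized in C by a tuple from M
   (with the same parameters). *)
Definition fs_in (M X B : C -> Prop) : Prop :=
  forall (phi : formula L) (n : nat) (e : nat -> C),
    (forall i, i < n -> X (e i)) -> (forall i, n <= i -> B (e i)) ->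
    sat e phi ->
    exists e', (forall i, i < n -> M (e' i)) /\ (forall i, n <= i -> e' i = e i) /\
               sat e' phi.

(* |S| < |C| : S is small (no injection of C into S). *)
Definition small (S : C -> Prop) : Prop :=
  ~ exists g : C -> {a : C | S a}, forall x y, g x = g y -> x = y.

(* C is |C|-saturated: every finitely satisfiable set of formulas in the
   variable 0 with parameters (values of the other variables) from a small set
   A is realized in C. *)
Definition saturated : Prop :=
  forall (A : C -> Prop) (p : formula L * (nat -> C) -> Prop), small A ->
    (forall q, p q -> forall i, 0 < i -> A (snd q i)) ->
    (forall l : list (formula L * (nat -> C)), (forall q, In q l -> p q) ->
       exists c, forall q, In q l -> sat (upd (snd q) 0 c) (fst q)) ->
    exists c, forall q, p q -> sat (upd (snd q) 0 c) (fst q).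

End Semantics.

(* Main.v *)
Require Import Defs.
From Stdlib Require Import List Vectors.Fin PeanoNat Arith Lia FunctionalExtensionality Classical.

Section Ren.
Variable L : signature.
Fixpoint ren_t (s : nat -> nat) (t : term L) : term L :=
  match t with
  | Var _ n => Var L (s n)
  | App f ts => App f (fun i => ren_t s (ts i))
  end.
Fixpoint ren (s : nat -> nat) (p : formula L) : formula L :=
  match p with
  | Fal _ => Fal L
  | Eq t1 t2 => Eq (ren_t s t1) (ren_t s t2)
  | Rel r ts => Rel r (fun i => ren_t s (ts i))
  | Neg q => Neg (ren s q)
  | And p q => And (ren s p) (ren s q)
  | Ex x q => Ex (s x) (ren s q)
  end.

Variable C : structure L.

Lemma eval_ren s e t : eval C e (ren_t s t) = eval C (fun k => e (s k)) t.
Proof.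
  induction t as [n|f ts IH]; simpl; auto.
  f_equal; apply functional_extensionality; auto.
Qed.

Lemma sat_ren s (Hs : forall a b, s a = s b -> a = b) S p : forall e,
  sat_in C S e (ren s p) <-> sat_in C S (fun k => e (s k)) p.
Proof.
  induction p; intro e; simpl.
  - tauto.
  - rewrite !eval_ren; tauto.
  - assert (H : (fun i => eval C e (ren_t s (t i))) = (fun i => eval C (fun k => e (s k)) (t i)))
      by (apply functional_extensionality; intro; apply eval_ren).
    rewrite H; tauto.
  - rewrite IHp; tauto.
  - rewrite IHp1, IHp2; tauto.
  - split; intros [a [Ha Hp]]; exists a; split; auto; apply IHp in Hp || apply IHp;
    [ replace (fun k => upd C e (s n) a (s k)) with (upd C (fun k => e (s k)) n a) in Hp; auto
    | replace (fun k => upd C e (s n) a (s k)) with (upd C (fun k => e (s k)) n a); auto ];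
    apply functional_extensionality; intro k; unfold upd;
    destruct (Nat.eqb_spec k n), (Nat.eqb_spec (s k) (s n)); subst; auto;
    exfalso; auto.
Qed.
End Ren.

Definition swp (x k : nat) : nat :=
  if Nat.eqb k 0 then x else if Nat.eqb k x then 0 else k.

Lemma swp_inv x k : swp x (swp x k) = k.
Proof.
  unfold swp.
  destruct (Nat.eqb_spec k 0) as [E1|E1]; [subst; rewrite Nat.eqb_refl;
    destruct (Nat.eqb_spec x 0); auto|].
  destruct (Nat.eqb_spec k x) as [E2|E2]; [subst; simpl; auto|].
  destruct (Nat.eqb_spec k 0); [contradiction|]. destruct (Nat.eqb_spec k x); [contradiction|auto].
Qed.

Lemma swp_inj x a b : swp x a = swp x b -> a = b.
Proof. intro H; rewrite <- (swp_inv x a), <- (swp_inv x b), H; auto. Qed.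

Theorem lemma2 (L : signature) (C : structure L) (HC : saturated C)
  (M N : C -> Prop)
  (HN : elem_sub C N (fun _ => True)) (HNsmall : small C N)
  (HMN : elem_sub C M N)
  (I : Type) (lt : I -> I -> Prop)
  (lt_irrefl : forall i, ~ lt i i)
  (lt_trans : forall i j k, lt i j -> lt j k -> lt i k)
  (lt_total : forall i j, lt i j \/ i = j \/ lt j i)
  (A : I -> C -> Prop)
  (Hfs : forall i, fs_in C M (A i) (fun x => M x \/ exists j, lt j i /\ A j x))
  (Hcover : forall x, N x <-> (M x \/ exists i, A i x))
  (I0 : I -> Prop) (HI0 : forall i j, lt j i -> I0 i -> I0 j) :
  elem_sub C (fun x => M x \/ exists i, I0 i /\ A i x) N.
Proof.
  set (SS := fun x => M x \/ exists i, I0 i /\ A i x).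
  destruct HMN as [[[m0 Hm0] HMc] [HNs [HMN' HMNe]]].
  destruct HN as [_ [_ [_ HNe]]].
  assert (HSN : forall x, SS x -> N x).
  { intros x [Hx|[i [_ Hx]]]; apply Hcover; eauto. }
  assert (HSB : forall j x, ~ I0 j -> SS x -> M x \/ exists j', lt j' j /\ A j' x).
  { intros j x Hj [Hx|[i [Hi Hx]]]; auto. right; exists i; split; auto.
    destruct (lt_total i j) as [H|[H|H]]; auto; subst; exfalso; eauto. }
  assert (HNS : forall b, N b -> SS b \/ exists j, ~ I0 j /\ A j b).
  { intros b Hb. apply Hcover in Hb. destruct Hb as [Hb|[j Hj]].
    - left; left; auto.
    - destruct (classic (I0 j)); [left; right; eauto | right; eauto]. }
  split; [split|split; [|split]].
  - exists m0; left; auto.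
  - intros f args Hargs.
    assert (Hb : N (fint C f args)) by (apply (proj2 HNs); intro; auto).
    destruct (HNS _ Hb) as [H|[j [Hj Hbj]]]; auto.
    set (n := far L f).
    set (g := fun k => match lt_dec k n with
                       | left h => args (Fin.of_nat_lt h) | right _ => m0 end).
    assert (Hg : forall k : Fin.t n, g (proj1_sig (Fin.to_nat k)) = args k).
    { intro k; unfold g. destruct (lt_dec _ _) as [h|h].
      - f_equal. destruct (Fin.to_nat k) as [kk pk] eqn:E; simpl in *.
        rewrite <- (Fin.of_nat_to_nat_inv k), E. apply Fin.of_nat_ext.
      - exfalso; apply h; apply (proj2_sig (Fin.to_nat k)). }
    set (phi := Eq (Var L 0) (App f (fun k => Var L (S (proj1_sig (Fin.to_nat k)))))).
    set (e := fun k => match k with 0 => fint C f args | S k => g k end).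
    destruct (Hfs j phi 1 e) as [e' [H1 [H2 H3]]].
    + intros i Hi; assert (i = 0) by lia; subst; auto.
    + intros [|i] Hi; [lia|]. simpl. apply (HSB j); auto. unfold g.
      destruct (lt_dec _ _); auto. left; auto.
    + unfold sat, phi; simpl. f_equal. apply functional_extensionality; intro k.
      rewrite Hg; auto.
    + left. unfold sat, phi in H3; simpl in H3. replace (fint C f args) with (e' 0); [apply H1; lia|].
      rewrite H3. f_equal; apply functional_extensionality; intro k.
      rewrite H2 by lia. simpl. rewrite Hg; auto.
  - auto.
  - auto.
  - intro phi; induction phi; intros e He; simpl; try tauto.
    + rewrite IHphi; tauto.
    + rewrite IHphi1, IHphi2; tauto.
    + split.
      * intros [a [Ha Hp]]; exists a; split; auto. apply IHphi; auto.
        intro k; unfold upd; destruct (Nat.eqb k n); auto.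
      * intros [a [Ha Hp]].
        assert (Hupd : forall b, SS b -> forall k, SS (upd C e n b k)).
        { intros b Hb k; unfold upd; destruct (Nat.eqb k n); auto. }
        destruct (HNS a Ha) as [HaS|[j [Hj Haj]]].
        { exists a; split; auto. apply IHphi; auto. }
        set (e1 := fun k => upd C e n a (swp n k)).
        assert (He1 : sat_in C N e1 (ren L (swp n) phi)).
        { apply (@sat_ren L C (swp n) (swp_inj n)). unfold e1.
          replace (fun k => upd C e n a (swp n (swp n k))) with (upd C e n a); auto.
          apply functional_extensionality; intro; rewrite swp_inv; auto. }
        assert (HN1 : forall k, N (e1 k)).
        { intro k; unfold e1, upd; destruct (Nat.eqb _ _); auto. }
        apply HNe in He1; auto.
        destruct (Hfs j (ren L (swp n) phi) 1 e1) as [e2 [H1 [H2 H3]]].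
        { intros i Hi; assert (i = 0) by lia; subst. unfold e1, upd, swp; simpl.
          rewrite Nat.eqb_refl; auto. }
        { intros i Hi. unfold e1, upd. destruct (Nat.eqb_spec (swp n i) n) as [E|E].
          - exfalso. rewrite <- (swp_inv n i), E in Hi. unfold swp in Hi.
            rewrite Nat.eqb_refl in Hi. destruct (Nat.eqb_spec n 0); simpl in Hi; lia.
          - apply (HSB j); auto. }
        { exact He1. }
        assert (HN2 : forall k, N (e2 k)).
        { intros [|k]; [apply HMN'; apply H1; lia| rewrite H2 by lia; auto]. }
        apply HNe in H3; auto.
        apply (proj1 (@sat_ren L C (swp n) (swp_inj n) _ _ _)) in H3.
        assert (Heq : (fun k => e2 (swp n k)) = upd C e n (e2 0)).
        { apply functional_extensionality; intro k. unfold upd.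
          destruct (Nat.eqb_spec k n).
          - subst; unfold swp. rewrite Nat.eqb_refl. destruct (Nat.eqb_spec n 0); subst; auto.
          - assert (swp n k <> 0).
            { intro E. apply n0. rewrite <- (swp_inv n k), E. unfold swp; simpl; auto. }
            rewrite H2 by lia. unfold e1, upd. rewrite swp_inv.
            destruct (Nat.eqb_spec k n); [contradiction|auto]. }
        rewrite Heq in H3.
        exists (e2 0); split; [left; apply H1; lia|].
        apply IHphi; auto. apply Hupd. left; apply H1; lia.
Qed.
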